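(* Let $\mathcal C$ be a linear $[n,k]$ MDS code over $F=\mathrm{GF}(q)$ with $k<n$, and let $L\in\mathbb Z^+$ satisfy $L<\binom{n}{k}$. If $q\ge\binom{n}{k+1}$, then $\mathcal C$ is not $(n-k,L)$-list decodable.
   Context: For $L\in\mathbb Z^+$ and $\tau\in\mathbb Z_{\ge0}$, a code $\mathcal C\subseteq F^n$ is $(\tau,L)$-list decodable if for every $y\in F^n$ at most $L$ codewords of $\mathcal C$ lie at Hamming distance at most $\tau$ from $y$. *)

(* Defs.v *)
From HB Require Import structures.
From mathcomp Require Import all_boot all_order all_algebra.
Set Implicit Arguments. Unset Strict Implicit. Unset Printing Implicit Defensive.
Import GRing.Theory.
Local Open Scope ring_scope.

Definition hdist (F : finFieldType) (n : nat) (x y : 'rV[F]_n) : nat :=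
  #|[set i : 'I_n | x 0 i != y 0 i]|.

Definition has_min_dist (F : finFieldType) (n : nat) (C : {vspace 'rV[F]_n}) (d : nat) : Prop :=
  (forall c1 c2, c1 \in C -> c2 \in C -> c1 != c2 -> (d <= hdist c1 c2)%N) /\
  (exists c1, exists c2, [/\ c1 \in C, c2 \in C, c1 != c2 & hdist c1 c2 = d]).

Definition is_linear_MDS (F : finFieldType) (n k : nat) (C : {vspace 'rV[F]_n}) : Prop :=
  \dim C = k /\ has_min_dist C (n - k + 1).

Definition list_decodable (F : finFieldType) (n : nat) (C : {vspace 'rV[F]_n}) (tau L : nat) : Prop :=
  forall y : 'rV[F]_n, (#|[set c : 'rV[F]_n | (c \in C) && (hdist y c <= tau)%N]| <= L)%N.

(* Main.v *)
Require Import Defs.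
From HB Require Import structures.
From mathcomp Require Import all_boot all_order all_algebra all_field.
From mathcomp Require Import zify.
Set Implicit Arguments. Unset Strict Implicit. Unset Printing Implicit Defensive.
Import GRing.Theory.

Section S.
Variables (F : finFieldType) (n : nat).
Local Notation V := 'rV[F]_n.

Definition agr (x y : V) : {set 'I_n} := [set i | x 0%R i == y 0%R i].

Lemma hdistE (x y : V) : hdist x y = (n - #|agr x y|)%N.
Proof.
rewrite /hdist.
have -> : [set i : 'I_n | x 0%R i != y 0%R i] = ~: agr x y by apply/setP=> i; rewrite !inE.
by rewrite cardsCs setCK card_ord.
Qed.

Lemma card_le_bigcup (I : finType) (P : pred I) (B : I -> {set V}) :
  (#|\bigcup_(i | P i) B i| <= \sum_(i | P i) #|B i|)%N.
Proof.
elim/big_rec2: _ => [|i U s Pi IH]; first by rewrite cards0.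
by apply: leq_trans (leq_card_setU _ _) _; rewrite leq_add2l.
Qed.

Lemma cardC (C : {vspace V}) : #|[set c | c \in C]| = (#|F| ^ \dim C)%N.
Proof. by rewrite cardsE card_vspace. Qed.

Lemma mds_inj (k : nat) (C : {vspace V}) (c c' : V) :
  has_min_dist C (n - k + 1) -> c \in C -> c' \in C ->
  (k <= #|agr c c'|)%N -> c = c'.
Proof.
move=> [Hd _] cC c'C Hk; apply/eqP; apply/negPn/negP => ne.
have := Hd _ _ cC c'C ne; rewrite hdistE.
have : (#|agr c c'| <= n)%N by rewrite -[X in (_ <= X)%N](card_ord n) max_card.
lia.
Qed.

Lemma interp (k : nat) (C : {vspace V}) (S : {set 'I_n}) (y : V) :
  is_linear_MDS k C -> #|S| = k -> exists c, (c \in C) && (S \subset agr y c).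
Proof.
move=> [dC Hd] cS.
pose r (c : V) := [ffun j : {i | i \in S} => c 0%R (val j)].
have rinj : {in [set c | c \in C] &, injective r}.
  move=> c c'; rewrite !inE => cC c'C /ffunP Hr; apply: (mds_inj Hd cC c'C).
  rewrite -cS; apply: subset_leq_card; apply/subsetP => i iS.
  by rewrite inE; have := Hr (exist _ i iS); rewrite !ffunE /= => ->.
have Him : r @: [set c | c \in C] = setT.
  apply/eqP; rewrite eqEcard subsetT /= card_in_imset // cardC cardsT card_ffun.
  by rewrite card_sig cardE -cardE dC -cS.
have : r y \in r @: [set c | c \in C] by rewrite Him inE.
case/imsetP => c; rewrite inE => cC /ffunP Hr; exists c; rewrite cC /=.
apply/subsetP => i iS; rewrite inE; have := Hr (exist _ i iS); rewrite !ffunE /= => ->.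
by [].
Qed.

Definition badT (C : {vspace V}) (T : {set 'I_n}) : {set V} :=
  [set y | [exists c, (c \in C) && (T \subset agr y c)]].

Lemma card_badT (k : nat) (C : {vspace V}) (T : {set 'I_n}) :
  \dim C = k -> #|T| = k.+1 -> (#|badT C T| <= #|F| ^ (n - 1))%N.
Proof.
move=> dC cT.
pose g (p : V * {ffun {i | i \notin T} -> F}) : V :=
  (\row_i (if insub i is Some j then p.2 j else p.1 0%R i))%R.
have sub : badT C T \subset g @: setX [set c | c \in C] setT.
  apply/subsetP => y; rewrite inE => /existsP [c /andP [cC Tc]].
  apply/imsetP; exists (c, [ffun j => y 0%R (val j)]); first by rewrite !inE andbT; exact: cC.
  apply/rowP => i; rewrite /g mxE /=; case: insubP => [j _ <-|]; first by rewrite ffunE.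
  rewrite negbK => iT; move/subsetP: Tc => /(_ i iT); rewrite inE => /eqP.
  by move=> ->.
apply: leq_trans (subset_leq_card sub) _; apply: leq_trans (leq_imset_card _ _) _.
rewrite cardsX cardC cardsT card_ffun card_sig dC.
have -> : #|[pred x | x \notin T]| = (n - k.+1)%N.
  have e1 : #|[pred x | x \notin T]| = #|~: T| by apply: eq_card => i; rewrite !inE.
  by have := cardsC T; rewrite card_ord e1 cT; lia.
rewrite -expnD; apply: leq_pexp2l; first by apply/card_gt0P; exists 0%R.
have : (#|T| <= n)%N by rewrite -[X in (_ <= X)%N](card_ord n) max_card.
rewrite cT; lia.
Qed.

Lemma good (k : nat) (C : {vspace V}) :
  \dim C = k -> (k < n)%N -> ('C(n, k.+1) <= #|F|)%N ->
  exists y : V, forall T : {set 'I_n}, #|T| = k.+1 -> y \notin badT C T.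
Proof.
move=> dC kn Hq.
pose K := [set T : {set 'I_n} | #|T| == k.+1].
pose U := \bigcup_(T in K) badT C T.
have q2 : (1 < #|F|)%N.
  by apply/card_gt1P; exists 0%R, 1%R; split => //; rewrite eq_sym oner_eq0.
set P := (#|F| ^ (n - 1))%N.
have P1 : (0 < P)%N by rewrite expn_gt0; apply/orP; left; lia.
have qP : (#|F| ^ n = #|F| * P)%N by rewrite /P -expnS; congr (_ ^ _); lia.
have sU : U \subset 0%R |: \bigcup_(T in K) (badT C T :\ 0%R).
  apply/subsetP => y /bigcupP [T TK yT]; rewrite !inE.
  case: eqP => //= /eqP y0; apply/bigcupP; exists T => //; rewrite !inE y0 /=.
  by rewrite inE in yT.
have cU : (#|U| < #|F| ^ n)%N.
  apply: leq_ltn_trans (subset_leq_card sU) _ .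
  apply: leq_ltn_trans (leq_card_setU _ _) _; rewrite cards1 qP.
  have : (\sum_(T in K) #|badT C T :\ 0%R| <= \sum_(T in K) (P - 1))%N.
    apply: leq_sum => T; rewrite inE => /eqP cT.
    have := card_badT dC cT; rewrite (cardsD1 0%R (badT C T)).
    have -> : (0%R : V) \in badT C T.
      rewrite inE; apply/existsP; exists 0%R; rewrite mem0v /=.
      by apply/subsetP => i _; rewrite inE.
    rewrite -/P add1n => H; rewrite subn1 -ltnS prednK //.
  rewrite sum_nat_const card_draws card_ord => Hs.
  have := @card_le_bigcup _ (fun T => T \in K) (fun T => badT C T :\ 0%R).
  move: Hs Hq q2 P1; rewrite -/K; nia.
have : (#|U| < #|[set: V]|)%N by rewrite cardsT card_mx mul1n.
move=> cUT.
case: (pickP [pred y : V | y \notin U]) => [y /= yU | H].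
  exists y => T cT; apply: contra yU => yT; apply/bigcupP; exists T => //.
  by rewrite inE cT.
have : [set: V] \subset U by apply/subsetP => y _; have := H y; rewrite /= => /negbFE.
by move/subset_leq_card => /(leq_ltn_trans) /(_ cUT); rewrite ltnn.
Qed.
End S.

Unset Implicit Arguments.
Set Strict Implicit.

Theorem mainTheorem6 (F : finFieldType) (n k : nat) (C : {vspace 'rV[F]_n}) (L : nat) :
  is_linear_MDS k C -> (k < n)%N -> (0 < L)%N -> (L < 'C(n, k))%N ->
  ('C(n, k.+1) <= #|F|)%N ->
  ~ list_decodable C (n - k) L.
Proof.
move=> MDS kn L0 LC Hq Hdec; have [dC Hd] := MDS.
have [y Hy] := good dC kn Hq.
pose K := [set S : {set 'I_n} | #|S| == k].
pose f (S : {set 'I_n}) : 'rV[F]_n := odflt 0%R [pick c | (c \in C) && (S \subset agr y c)].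
have fP : forall S, S \in K -> (f S \in C) && (S \subset agr y (f S)).
  move=> S; rewrite inE => /eqP cS; rewrite /f; case: pickP => [c //|H].
  by have [c Hc] := interp y MDS cS; rewrite H in Hc.
have finj : {in K &, injective f}.
  move=> S S' SK S'K e.
  have /andP[_ s1] := fP _ SK; have /andP[cC s2] := fP _ S'K; rewrite -e in s2 cC.
  apply/eqP/negPn/negP => ne.
  have /subsetPn [x xS' xS] : ~~ (S' \subset S).
    apply/negP => sub; move: ne; rewrite eq_sym eqEcard sub.
    by move: SK S'K; rewrite !inE => /eqP -> /eqP ->; rewrite leqnn.
  have cT : #|x |: S| = k.+1 by rewrite cardsU1 xS; move: SK; rewrite inE => /eqP ->.
  have := Hy _ cT; rewrite inE; move/negP; apply; apply/existsP; exists (f S).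
  rewrite cC /= subUset s1 andbT sub1set; exact: (subsetP s2).
have sub : f @: K \subset [set c | (c \in C) && (hdist y c <= n - k)%N].
  apply/subsetP => c /imsetP [S SK ->]; rewrite inE.
  have /andP[-> s1] := fP _ SK; rewrite hdistE /=; apply: leq_sub2l.
  by move: SK; rewrite inE => /eqP <-; apply: subset_leq_card.
have := Hdec y; have := subset_leq_card sub; rewrite card_in_imset // card_draws card_ord.
move=> h1 h2; have := leq_trans h1 h2; move: LC; rewrite ltnNge => /negP; exact.
Qed.
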